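(* Let $\mathbf{k}$ be a commutative ring, $n\ge0$, $\mathcal{A}=\mathbf{k}[S_n]$. For every $\beta\in\operatorname{Comp}_n$, the subspace $\mathcal{R}_\beta$ is a $(\Sigma_n,\mathcal{A})$-subbimodule of $\mathcal{A}$; that is, $\mathcal{R}_\beta\mathcal{A}\subseteq\mathcal{R}_\beta$ and $\Sigma_n\mathcal{R}_\beta\subseteq\mathcal{R}_\beta$.
   Context: $S_n$ is the symmetric group on $[n]=\{1,\dots,n\}$, with product $(uw)(i)=u(w(i))$. For $w\in S_n$, $\operatorname{Des}(w)=\{i\in[n-1]: w(i)>w(i+1)\}$. For $I\subseteq[n-1]$, $\mathbf{B}_I=\sum_{w\in S_n,\ \operatorname{Des}(w)\subseteq I} w\in\mathcal{A}$. The descent algebra $\Sigma_n\subseteq\mathcal{A}$ is the $\mathbf{k}$-span of all $\mathbf{B}_I$ for $I\subseteq[n-1]$. A composition $\alpha=(\alpha_1,\dots,\alpha_p)$ of $n$ is a finite sequence of positive integers with sum $n$; $\operatorname{Comp}_n$ is the set of these. $\operatorname{Set}(\alpha)=\{\alpha_1,\alpha_1+\alpha_2,\dots,\alpha_1+\cdots+\alpha_{p-1}\}$, $\mathbf{B}_\alpha:=\mathbf{B}_{\operatorname{Set}(\alpha)}$, and $\mathcal{R}_\beta:=\mathbf{B}_\beta\mathcal{A}$. *)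

(* Defs.v *)
From HB Require Import structures.
From mathcomp Require Import all_boot all_order all_algebra all_fingroup.
Set Implicit Arguments. Unset Strict Implicit. Unset Printing Implicit Defensive.
Import GRing.Theory.
Local Open Scope ring_scope.

(* The group algebra k[S_n] is modelled as {ffun 'S_n -> k}: an element is
   the function w |-> coefficient of w.  NOTE: the canonical ring
   product on {ffun _ -> k} is pointwise; we do NOT use it.  The algebra
   product is the convolution [amul] below. *)
Definition galg (k : comPzRingType) (n : nat) := {ffun 'S_n -> k}.

(* The paper's product in S_n: (u w)(i) = u (w i), i.e. apply w first.
   In mathcomp, (s * t)%g x = t (s x), so the paper's u w is (w * u)%g. *)
Definition pprod (n : nat) (u w : 'S_n) : 'S_n := (w * u)%g.

Definition amul (k : comPzRingType) (n : nat) (f g : galg k n) : galg k n :=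
  [ffun w => \sum_(u : 'S_n) \sum_(v : 'S_n | pprod u v == w) f u * g v].

Definition ascale (k : comPzRingType) (n : nat) (c : k) (f : galg k n) : galg k n :=
  [ffun w => c * f w].

Definition aperm_el (k : comPzRingType) (n : nat) (w : 'S_n) : galg k n :=
  [ffun x => if x == w then 1 else 0].

(* Descents, in the paper's 1-based numbering: i \in Des(w) iff
   1 <= i <= n-1 and w(i) > w(i+1).  Positions/values of 'S_n are 0-based
   ('I_n = {0,...,n-1}), so paper position i is ordinal i-1. *)
Definition is_descent (n : nat) (w : 'S_n) (i : nat) : bool :=
  (0 < i < n)%N &&
  [exists j : 'I_n, exists j' : 'I_n,
     [&& val j == i.-1, val j' == i & (val (w j') < val (w j))%N]].

Definition Des_sub (n : nat) (w : 'S_n) (I : seq nat) : bool :=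
  [forall i : 'I_n, is_descent w (val i) ==> (val i \in I)].

Definition BI (k : comPzRingType) (n : nat) (I : seq nat) : galg k n :=
  \sum_(w : 'S_n | Des_sub w I) aperm_el k w.

Definition is_comp (n : nat) (a : seq nat) : bool :=
  all (fun x => 0 < x)%N a && (sumn a == n).

Definition SetC (a : seq nat) : seq nat :=
  [seq sumn (take j a) | j <- iota 1 (size a).-1].

Definition Balpha (k : comPzRingType) (n : nat) (a : seq nat) : galg k n :=
  BI k n (SetC a).

Definition in_Sigma (k : comPzRingType) (n : nat) (x : galg k n) : Prop :=
  exists s : seq (k * seq nat),
    all (fun p => all (fun i => 0 < i < n)%N p.2) s /\
    x = \sum_(p <- s) ascale p.1 (BI k n p.2).

Definition in_R (k : comPzRingType) (n : nat) (b : seq nat) (x : galg k n) : Prop :=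
  exists a : galg k n, x = amul (Balpha k n b) a.
Arguments in_R : clear implicits.

(* Main.v *)
Require Import Defs.
From mathcomp Require Import all_boot all_order all_algebra all_fingroup.
From mathcomp Require Import zify.
Set Implicit Arguments. Unset Strict Implicit. Unset Printing Implicit Defensive.

Section Comb.
Local Open Scope group_scope.
Variable n : nat.
Implicit Types (b : nat -> nat) (w y u : 'S_n).

Definition mono b := forall x z, x <= z -> b x <= b z.

Definition Sh b w := [forall a : 'I_n, forall c : 'I_n,
  ((a < c) && (b a == b c)) ==> (w a < w c)].
Definition Sy b y := [forall x : 'I_n, b (y x) == b x].

Lemma ShP b w (a c : 'I_n) : Sh b w -> a < c -> b a = b c -> w a < w c.
Proof.
by move=> /forallP/(_ a)/forallP/(_ c)/implyP H ac bac; apply: H; rewrite ac bac eqxx.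
Qed.

Lemma SyP b y x : Sy b y -> b (y x) = b x.
Proof. by move=> /forallP/(_ x)/eqP. Qed.

Lemma Sh_lt b w (a c : 'I_n) : Sh b w -> b a = b c -> (w a < w c) = (a < c).
Proof.
move=> H bac; case: (ltngtP a c) => h.
- exact: ShP h bac.
- by apply/negbTE; rewrite -leqNgt ltnW // (ShP H h).
- by rewrite (val_inj h) ltnn.
Qed.

Lemma Sy_inv b y : Sy b y -> Sy b (y^-1)%g.
Proof. by move=> H; apply/forallP => x; rewrite -{2}(permKV y x) (SyP _ H). Qed.

Lemma Sy1 b : Sy b 1%g.
Proof. by apply/forallP => x; rewrite perm1. Qed.

Lemma Sy_mul b y y' : Sy b y -> Sy b y' -> Sy b (y * y')%g.
Proof. by move=> H H'; apply/forallP => x; rewrite permM (SyP _ H') (SyP _ H). Qed.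

Lemma incr_ge (r : 'S_n) : (forall a c : 'I_n, a < c -> r a < r c) ->
  forall x : 'I_n, x <= r x.
Proof.
move=> H.
suff: forall m (x : 'I_n), val x = m -> m <= r x by move=> S x; exact: S.
elim=> [//|m IH] x hx.
have hm : m < n by move: (ltn_ord x); rewrite hx; lia.
have := IH (Ordinal hm) erefl.
have := H (Ordinal hm) x; rewrite hx /= ltnSn => /(_ isT).
lia.
Qed.

Lemma incr_id (r : 'S_n) : (forall a c : 'I_n, a < c -> r a < r c) -> r = 1%g.
Proof.
move=> H.
have Hi : forall a c : 'I_n, a < c -> r^-1 a < r^-1 c.
  move=> a c ac; case: (ltngtP (r^-1 a) (r^-1 c)) => // h.
    by have := H _ _ h; rewrite !permKV ltnNge ltnW.
  by move/val_inj/perm_inj: h => h; rewrite h ltnn in ac.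
apply/permP => x; rewrite perm1; apply/val_inj/eqP.
rewrite eqn_leq incr_ge // andbT.
by have := incr_ge Hi (r x); rewrite permK.
Qed.

Lemma Sh_uniq b w w' y y' : mono b -> Sh b w -> Sh b w' -> Sy b y -> Sy b y' ->
  (y * w = y' * w')%g -> w = w'.
Proof.
move=> hb Hw Hw' Hy Hy' E.
pose r := (y'^-1 * y)%g.
have rE x : w' x = w (r x).
  by rewrite -[in LHS](permKV y' x) -(permM y' w') -E !permM.
have Sr : Sy b r by apply: Sy_mul => //; apply: Sy_inv.
have : r = 1%g.
  apply: incr_id => a c ac.
  case: (eqVneq (b a) (b c)) => bac.
    rewrite -(Sh_lt Hw); last by rewrite !(SyP _ Sr) bac.
    by rewrite -!rE (ShP Hw' ac bac).
  have : b a < b c by rewrite ltn_neqAle bac hb // ltnW.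
  rewrite -(SyP a Sr) -(SyP c Sr) => h.
  rewrite ltnNge; apply/negP => h'; move: (hb _ _ h'); lia.
by move=> r1; apply/permP => x; rewrite rE r1 perm1.
Qed.

Definition pot w := (\sum_(x : 'I_n) x * w x)%N.

Lemma pot_swap w (a c : 'I_n) : a < c -> w c < w a -> pot w < pot (tperm a c * w).
Proof.
move=> ac lt.
have ca : c != a by apply/eqP => h; rewrite h ltnn in ac.
rewrite /pot [X in X < _](bigD1 a) // [X in _ < X](bigD1 a) //=.
rewrite [X in _ + X < _](bigD1 c) ?ca // [X in _ < _ + X](bigD1 c) ?ca //=.
rewrite !permM tpermL tpermR.
rewrite [X in _ < _ + (_ + X)](eq_bigr (fun z : 'I_n => (z * w z)%N)); last first.
  by move=> z /andP [za zc]; rewrite permM tpermD // eq_sym.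
set R := bigop.body _ _ _.
move: ac lt; clearbody R; move: (nat_of_ord a) (nat_of_ord c) (nat_of_ord (w a)) (nat_of_ord (w c)) => A C WA WC h1 h2.
have : 0 < (C - A) * (WA - WC) by rewrite muln_gt0 !subn_gt0 h1 h2.
nia.
Qed.

Definition ydec b (s : 'S_n) := [arg max_(y > 1%g | Sy b y) pot (y^-1 * s)%g].
Definition wdec b (s : 'S_n) := ((ydec b s)^-1 * s)%g.

Lemma dec_eq b s : s = (ydec b s * wdec b s)%g.
Proof. by rewrite /wdec mulgA mulgV mul1g. Qed.

Lemma Sy_ydec b s : Sy b (ydec b s).
Proof. by rewrite /ydec; case: arg_maxnP => //; apply: Sy1. Qed.

Lemma Sh_wdec b s : Sh b (wdec b s).
Proof.
rewrite /wdec /ydec; case: arg_maxnP; first exact: Sy1.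
move=> y Hy Hmax; set w := (y^-1 * s)%g.
apply/forallP => a; apply/forallP => c; apply/implyP => /andP [ac /eqP bac].
rewrite ltnNge; apply/negP => le.
have neq : a != c by apply/eqP => h; rewrite h ltnn in ac.
have lt : w c < w a.
  rewrite ltn_neqAle le andbT; apply/eqP => /val_inj/perm_inj h.
  by rewrite h ltnn in ac.
pose t := tperm a c.
have bt z : b (t z) = b z.
  by rewrite /t; case: tpermP => // ->.
have Sy' : Sy b (y * t)%g.
  by apply/forallP => x; rewrite permM bt (SyP _ Hy).
have := Hmax _ Sy'.
have -> : ((y * t)^-1 * s = t * w)%g by rewrite invMg tpermV mulgA.
move=> h2; have := leq_trans (pot_swap ac lt) h2; by rewrite ltnn.
Qed.


Section Inv.
Variables (bI bJ : nat -> nat) (hI : mono bI) (hJ : mono bJ).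

Definition cnt (s : 'S_n) := #|[pred u : 'S_n | Sh bI u && Sh bJ (s * u^-1)%g]|.

Definition EqJ (s s' : 'S_n) := forall a c : 'I_n, bJ a = bJ c ->
  (s a < s c) = (s' a < s' c).

Lemma card_le (T : finType) (P Q : pred T) (f g : T -> T) :
  (forall x, P x -> Q (f x)) -> (forall x, P x -> g (f x) = x) -> #|P| <= #|Q|.
Proof.
move=> PQ gf.
rewrite -(card_in_imset (f := f) (D := P)); last first.
  by move=> x1 x2 h1 h2 e; rewrite -(gf _ h1) -(gf _ h2) e.
apply: subset_leq_card; apply/subsetP => x /imsetP [v hv ->]; exact: PQ.
Qed.

Lemma cnt_le s s' : EqJ s s' -> cnt s <= cnt s'.
Proof.
move=> E.
pose tau := (s^-1 * s')%g.
pose f u := wdec bI (u * tau)%g.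
pose g u := wdec bI (u * tau^-1)%g.
apply: (card_le (f := f) (g := g)) => u /andP [Hu Hp].
- set t := ydec bI (u * tau)%g.
  have Ht : Sy bI t by apply: Sy_ydec.
  have D : (u * tau = t * f u)%g by apply: dec_eq.
  have key z : f u (t z) = tau (u z) by rewrite -permM -D permM.
  have pE x : ((s' * (f u)^-1)%g x) = t ((s * u^-1)%g x).
    apply: (@perm_inj _ (f u)); rewrite permM permKV key permM permKV.
    by rewrite /tau permM permK.
  apply/andP; split; first exact: Sh_wdec.
  apply/forallP => a; apply/forallP => c; apply/implyP => /andP [ac /eqP bac].
  rewrite !pE.
  set pa := (s * u^-1)%g a; set pc := (s * u^-1)%g c.
  have lt : pa < pc by exact: (ShP Hp ac bac).
  have sa : u pa = s a by rewrite /pa permM permKV.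
  have sc : u pc = s c by rewrite /pc permM permKV.
  case: (eqVneq (bI pa) (bI pc)) => bp.
    rewrite -(Sh_lt (Sh_wdec bI (u * tau)%g)); last by rewrite !(SyP _ Ht) bp.
    rewrite -/(f u) !key /tau !permM sa sc !permK.
    by rewrite -(E _ _ bac) -sa -sc (Sh_lt Hu bp).
  have : bI pa < bI pc by rewrite ltn_neqAle bp hI // ltnW.
  rewrite -(SyP pa Ht) -(SyP pc Ht) => h.
  rewrite ltnNge; apply/negP => h'; move: (hI h'); lia.
- set t := ydec bI (u * tau)%g.
  have Ht : Sy bI t by apply: Sy_ydec.
  have D : (u * tau = t * f u)%g by apply: dec_eq.
  have E2 : (f u * tau^-1 = t^-1 * u)%g.
    by rewrite -[f u](mulKg t) -mulgA -D mulgK.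
  rewrite /g E2.
  symmetry; apply: (Sh_uniq hI Hu (Sh_wdec _ _) (Sy_inv Ht) (Sy_ydec _ _)).
  exact: dec_eq.
Qed.

Lemma cnt_eq s s' : EqJ s s' -> cnt s = cnt s'.
Proof.
move=> E; apply/eqP; rewrite eqn_leq !cnt_le //.
by move=> a c h; rewrite E.
Qed.

End Inv.
End Comb.

Definition bI (I : seq nat) (x : nat) := count (fun i => (0 < i <= x)%N) I.

Lemma bI_mono I : mono (bI I).
Proof.
move=> x z xz; apply: sub_count => i /= /andP [-> ix]; exact: leq_trans ix xz.
Qed.

Lemma bIS I x : bI I x.+1 = bI I x + count_mem x.+1 I.
Proof.
rewrite /bI; elim: I => //= i I ->.
case: (ltngtP i x.+1) => [h|h|->].
- have h1 : (i <= x.+1) = true by rewrite ltnW.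
  have h2 : (i <= x) = true by rewrite -ltnS.
  have h3 : (i == x.+1) = false by rewrite ltn_eqF.
  rewrite ?h1 ?h2 ?h3 /= ?andbT; lia.
- have h1 : (i <= x.+1) = false by rewrite leqNgt h.
  have h2 : (i <= x) = false by apply/negbTE; rewrite -ltnNge ltnW.
  have h3 : (i == x.+1) = false by rewrite gtn_eqF.
  rewrite ?h1 ?h2 ?h3 /= ?andbF; lia.
- rewrite ?leqnn ?ltnn ?eqxx /= ?andbF ?andbT; lia.
Qed.

Section DS.
Variable n : nat.

Lemma Des_Sh (w : 'S_n) I : Des_sub w I = Sh (bI I) w.
Proof.
apply/idP/idP.
- move=> /forallP HD.
  have Hadj : forall a c : 'I_n, nat_of_ord c = (nat_of_ord a).+1 -> nat_of_ord c \notin I -> w a < w c.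
    move=> a c hc nI; rewrite ltnNge; apply/negP => le.
    have neq : w c != w a.
      apply/eqP => /perm_inj h; move: hc; rewrite h; lia.
    have lt : w c < w a by rewrite ltn_neqAle neq le.
    have := HD c; rewrite /is_descent /= hc /= -hc ltn_ord.
    rewrite (negbTE nI) implybF => /negP; apply.
    rewrite andTb; apply/existsP; exists a; apply/existsP; exists c.
    by rewrite !eqxx lt.
  have H0 : forall a c : 'I_n, nat_of_ord c = (nat_of_ord a).+1 -> bI I a = bI I c -> w a < w c.
    move=> a c hc hb; apply: Hadj => //.
    rewrite /= in hc *; have e : bI I c = bI I (nat_of_ord a).+1 by have := congr1 (bI I) hc.
    rewrite hc; move: hb; rewrite e bIS -has_pred1 has_count -leqNgt. lia.
  suff: forall d (a c : 'I_n), nat_of_ord c = (nat_of_ord a + d.+1)%N -> bI I a = bI I c -> w a < w c.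
    move=> S; apply/forallP => a; apply/forallP => c; apply/implyP => /andP [ac /eqP hb].
    apply: (S (c - a.+1)%N) => //=; move: ac; lia.
  elim=> [|d IH] a c hc hb; first by apply: H0 => //; rewrite hc addn1.
  have hm : (nat_of_ord a).+1 < n by move: (ltn_ord c); rewrite hc; lia.
  pose m := Ordinal hm.
  have h1 : bI I a <= bI I m := bI_mono I (leqnSn a).
  have mc : (nat_of_ord m <= c)%N by rewrite /= hc; lia.
  have h2 : bI I m <= bI I c := bI_mono I mc.
  have h3 : bI I a = bI I m by move: hb h1 h2; lia.
  apply: (@ltn_trans (w m)); first by apply: H0.
  apply: IH; [rewrite /= hc; lia | move: hb h3; lia].
- move=> HS; apply/forallP => i; apply/implyP.
  move=> /andP [/andP [i0 iN] /existsP [j /existsP [j' /and3P [/eqP hj /eqP hj' lt]]]].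
  apply/negPn/negP => nI.
  have hj'j : nat_of_ord j' = (nat_of_ord j).+1 by rewrite hj hj'; lia.
  have c0 : count_mem (nat_of_ord j') I = 0.
    by apply/eqP; rewrite -leqn0 leqNgt -has_count has_pred1 hj'.
  have hb : bI I j = bI I j' by rewrite hj'j bIS -hj'j c0 addn0.
  have := ShP HS (_ : nat_of_ord j < nat_of_ord j') hb; rewrite hj'j ltnSn => /(_ isT).
  by rewrite ltnNge ltnW.
Qed.
End DS.

Import GRing.Theory.
Local Open Scope ring_scope.

Section Alg.
Variables (k : comPzRingType) (n : nat).
Implicit Types f g h : galg k n.

Lemma amulE f g w : amul f g w = \sum_(u : 'S_n) f u * g (w * u^-1)%g.
Proof.
rewrite ffunE; apply: eq_bigr => u _.
rewrite (eq_bigl (pred1 (w * u^-1)%g)) ?big_pred1_eq // => v /=.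
by rewrite /pprod (can2_eq (mulgK u) (mulgKV u)).
Qed.

Lemma amulA f g h : amul (amul f g) h = amul f (amul g h).
Proof.
apply/ffunP => w; rewrite !amulE.
under eq_bigr do rewrite amulE big_distrl /=.
rewrite exchange_big /=; apply: eq_bigr => u _.
rewrite amulE big_distrr /=.
rewrite (reindex_inj (mulIg u)) /=; apply: eq_bigr => v _.
by rewrite mulrA mulgK invMg mulgA.
Qed.

Lemma amul0r f : amul f 0 = 0.
Proof. apply/ffunP => w; rewrite amulE ffunE big1 // => u _; by rewrite ffunE mulr0. Qed.

Lemma amul0l f : amul 0 f = 0.
Proof. apply/ffunP => w; rewrite amulE ffunE big1 // => u _; by rewrite ffunE mul0r. Qed.

Lemma amulDr f g h : amul f (g + h) = amul f g + amul f h.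
Proof.
apply/ffunP => w; rewrite amulE [in RHS]ffunE !amulE -big_split; apply: eq_bigr => u _.
by rewrite ffunE mulrDr.
Qed.

Lemma amulDl f g h : amul (g + h) f = amul g f + amul h f.
Proof.
apply/ffunP => w; rewrite amulE [in RHS]ffunE !amulE -big_split; apply: eq_bigr => u _.
by rewrite ffunE mulrDl.
Qed.

Lemma amulZr c f g : amul f (ascale c g) = ascale c (amul f g).
Proof.
apply/ffunP => w; rewrite amulE [in RHS]ffunE !amulE big_distrr; apply: eq_bigr => u _.
by rewrite ffunE mulrCA.
Qed.

Lemma amulZl c f g : amul (ascale c f) g = ascale c (amul f g).
Proof.
apply/ffunP => w; rewrite amulE [in RHS]ffunE !amulE big_distrr; apply: eq_bigr => u _.
by rewrite ffunE /= mulrA.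
Qed.

Lemma amul_suml (I : Type) (r : seq I) (F : I -> galg k n) g :
  amul (\sum_(i <- r) F i) g = \sum_(i <- r) amul (F i) g.
Proof.
elim: r => [|i r IH]; first by rewrite !big_nil amul0l.
by rewrite !big_cons amulDl IH.
Qed.

Lemma amul_sumr (I : Type) (r : seq I) (F : I -> galg k n) g :
  amul g (\sum_(i <- r) F i) = \sum_(i <- r) amul g (F i).
Proof.
elim: r => [|i r IH]; first by rewrite !big_nil amul0r.
by rewrite !big_cons amulDr IH.
Qed.

End Alg.

Section Main.
Variables (k : comPzRingType) (n : nat).

Lemma BIE I (u : 'S_n) : BI k n I u = (Des_sub u I)%:R.
Proof.
rewrite /BI sum_ffunE.
under eq_bigr do rewrite ffunE.
rewrite -big_mkcondr.
case Pu: (Des_sub u I).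
  rewrite (eq_bigl (fun w => w == u)) ?big_pred1_eq //.
  move=> w /=; case: (eqVneq w u) => [->|ne]; first by rewrite Pu ?eqxx.
  by rewrite andbF.
rewrite big_pred0 // => w /=; case: (eqVneq w u) => [->|ne]; first by rewrite Pu.
by rewrite andbF.
Qed.

Lemma cntE I J (s : 'S_n) :
  amul (BI k n I) (BI k n J) s = (cnt (bI I) (bI J) s)%:R.
Proof.
rewrite amulE.
under eq_bigr do rewrite !BIE -natrM mulnb !Des_Sh.
rewrite -natr_sum /cnt -sum1_card; congr (_%:R).
by rewrite [RHS]big_mkcond /=; apply: eq_bigr => u _; rewrite inE; case: ifP.
Qed.

Definition zI I J : galg k n :=
  [ffun v => if Sy (bI J) v then (cnt (bI I) (bI J) v)%:R else 0].

Lemma key I J : amul (BI k n I) (BI k n J) = amul (BI k n J) (zI I J).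
Proof.
apply/ffunP => s; rewrite cntE amulE.
set y0 := ydec (bI J) s; set w0 := wdec (bI J) s.
have E0 : s = (y0 * w0)%g by apply: dec_eq.
have Sw0 : Sh (bI J) w0 by apply: Sh_wdec.
have Sy0 : Sy (bI J) y0 by apply: Sy_ydec.
clearbody y0 w0.
rewrite (bigD1 w0) //= big1.
  rewrite addr0 BIE Des_Sh Sw0 mul1r ffunE.
  have -> : (s * w0^-1)%g = y0 by rewrite {1}E0 mulgK.
  rewrite Sy0; congr (_%:R); apply: cnt_eq; first exact: bI_mono.
  move=> a c hac; rewrite E0 !permM.
  by rewrite (Sh_lt Sw0) // !(SyP _ Sy0).
move=> w ne; rewrite BIE Des_Sh ffunE.
case Sw: (Sh (bI J) w); last by rewrite mul0r.
case Sy': (Sy (bI J) (s * w^-1)%g); last by rewrite mulr0.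
have : w = w0.
  apply: (Sh_uniq (bI_mono J) Sw Sw0 Sy' Sy0).
  by rewrite mulgKV -E0.
by move=> h; rewrite h eqxx in ne.
Qed.

End Main.

Theorem proposition2p7 (k : comPzRingType) (n : nat) (b : seq nat) :
  is_comp n b ->
  (* R_beta is a k-submodule of A *)
  [/\ in_R k n b 0,
      (forall x y, in_R k n b x -> in_R k n b y -> in_R k n b (x + y)),
      (forall (c : k) x, in_R k n b x -> in_R k n b (ascale c x)),
  (* R_beta A \subseteq R_beta *)
      (forall x a, in_R k n b x -> in_R k n b (amul x a))
  (* Sigma_n R_beta \subseteq R_beta *)
    & (forall s x, in_Sigma s -> in_R k n b x -> in_R k n b (amul s x))].
Proof.
move=> _; split.
- by exists 0; rewrite amul0r.
- by move=> x y [a ->] [a' ->]; exists (a + a'); rewrite amulDr.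
- by move=> c x [a ->]; exists (ascale c a); rewrite amulZr.
- by move=> x c [a ->]; exists (amul a c); rewrite amulA.
- move=> s x [l [_ ->]] [a ->].
  exists (amul (\sum_(p <- l) ascale p.1 (zI k n p.2 (SetC b))) a).
  rewrite -!amulA; congr (amul _ a).
  rewrite amul_suml amul_sumr; apply: eq_bigr => p _.
  by rewrite amulZl amulZr /Balpha key.
Qed.
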